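(* Let $p$ be a prime, let $c,d$ be positive integers, let $X$ be a set with $d$ elements, let $L_c(X)$ be the free nilpotent $\mathbb{Z}_p$-Lie algebra of class $c$ on $X$, regarded inside $\widetilde{L}_c(X)=L_c(X)\otimes_{\mathbb{Z}_p}\mathbb{Q}_p$, and let $$\widehat{L}_c(X)=L_c(X)+\tfrac{1}{p}\gamma_2(L_c(X))+\dots+\tfrac{1}{p^{c-1}}\gamma_c(L_c(X)).$$ Let $I$ be an ideal of $L_c(X)$ of finite index and set $$\widehat{I}=I+\tfrac{1}{p}[I,L_c(X)]+\tfrac{1}{p^2}[I,{}_2L_c(X)]+\dots+\tfrac{1}{p^{c-1}}[I,{}_{c-1}L_c(X)]\subseteq\widetilde{L}_c(X).$$ Then $[\widehat{I},\widehat{L}_c(X)]\subseteq p\widehat{I}$; in particular $\widehat{I}$ is an ideal of $\widehat{L}_c(X)$.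
   Context: $L_c(X)$ is the free $\mathbb{Z}_p$-Lie algebra on $X$ modulo the $(c+1)$-st term of its lower central series; $\gamma_1(L)=L$, $\gamma_{i+1}(L)=[\gamma_i(L),L]$; $[I,{}_iL]=[\cdots[[I,L],L],\dots,L]$ with $i$ copies of $L$. Brackets of subsets denote $\mathbb{Z}_p$-spans of brackets. *)

(* Defs.v *)
From HB Require Import structures.
From mathcomp Require Import all_boot all_order all_algebra.
From mathcomp Require Import boolp.
Set Implicit Arguments. Unset Strict Implicit. Unset Printing Implicit Defensive.
Import Order.TTheory GRing.Theory Num.Theory.
Local Open Scope ring_scope.

Section Padic.
Variable p : nat.
Definition zbase : int := (p.-2.+2)%:Z.
Definition padic_coh (f : nat -> int) := forall n : nat, (f n.+1 %% zbase ^+ n)%Z = f n.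
Record padic := Padic { pval : nat -> int; pvalP : padic_coh pval }.

HB.instance Definition _ := gen_eqMixin padic.
HB.instance Definition _ := gen_choiceMixin padic.

Lemma padic_inj (x y : padic) : pval x =1 pval y -> x = y.
Proof.
case: x y => [f Hf] [g Hg] /= /funext E; subst g.
by rewrite (Prop_irrelevance Hf Hg).
Qed.

Lemma modz_mulr (a b d : int) : ((a %% (b * d))%Z = a %[mod d])%Z.
Proof.
by rewrite {2}(divz_eq a (b * d)) mulrA modzMDl.
Qed.

Lemma padic_modE (x : padic) n : (pval x n %% zbase ^+ n)%Z = pval x n.
Proof. by rewrite -(pvalP x n) modz_mod. Qed.

Lemma padic_cong (x : padic) n : (pval x n.+1 = pval x n %[mod zbase ^+ n])%Z.
Proof. by rewrite (pvalP x n) padic_modE. Qed.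

Definition mkp_fun (g : nat -> int) := fun n : nat => (g n %% zbase ^+ n)%Z.
Lemma mkp_coh (g : nat -> int) :
  (forall n, g n.+1 = g n %[mod zbase ^+ n])%Z -> padic_coh (mkp_fun g).
Proof. by move=> H n; rewrite /mkp_fun exprS modz_mulr H. Qed.

Definition pzero := Padic (@mkp_coh (fun _ => 0) (fun _ => erefl)).
Definition pone := Padic (@mkp_coh (fun _ => 1) (fun _ => erefl)).
Lemma padd_proof (x y : padic) :
  (forall n, pval x n.+1 + pval y n.+1 = pval x n + pval y n %[mod zbase ^+ n])%Z.
Proof. by move=> n; rewrite -modzDm !padic_cong modzDm. Qed.
Definition padd x y := Padic (mkp_coh (padd_proof x y)).
Lemma pmul_proof (x y : padic) :
  (forall n, pval x n.+1 * pval y n.+1 = pval x n * pval y n %[mod zbase ^+ n])%Z.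
Proof. by move=> n; rewrite -modzMm !padic_cong modzMm. Qed.
Definition pmul x y := Padic (mkp_coh (pmul_proof x y)).
Lemma popp_proof (x : padic) :
  (forall n, - pval x n.+1 = - pval x n %[mod zbase ^+ n])%Z.
Proof. by move=> n; rewrite -modzNm padic_cong modzNm. Qed.
Definition popp x := Padic (mkp_coh (popp_proof x)).

Lemma paddA : associative padd.
Proof. by move=> x y z; apply: padic_inj => n /=; rewrite /mkp_fun modzDml modzDmr addrA. Qed.
Lemma paddC : commutative padd.
Proof. by move=> x y; apply: padic_inj => n /=; rewrite /mkp_fun addrC. Qed.
Lemma padd0 : left_id pzero padd.
Proof. by move=> x; apply: padic_inj => n /=; rewrite /mkp_fun modzDml add0r padic_modE. Qed.
Lemma paddN : left_inverse pzero popp padd.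
Proof. by move=> x; apply: padic_inj => n /=; rewrite /mkp_fun modzDml addNr. Qed.

HB.instance Definition _ := GRing.isZmodule.Build padic paddA paddC padd0 paddN.

Lemma pmulA : associative pmul.
Proof. by move=> x y z; apply: padic_inj => n /=; rewrite /mkp_fun modzMml modzMmr mulrA. Qed.
Lemma pmulC : commutative pmul.
Proof. by move=> x y; apply: padic_inj => n /=; rewrite /mkp_fun mulrC. Qed.
Lemma pmul1 : left_id pone pmul.
Proof. by move=> x; apply: padic_inj => n /=; rewrite /mkp_fun modzMml mul1r padic_modE. Qed.
Lemma pmulD : left_distributive pmul padd.
Proof. by move=> x y z; apply: padic_inj => n /=; rewrite /mkp_fun modzMml modzDm mulrDl. Qed.
Lemma pone_neq0 : pone != (pzero : padic).
Proof.
apply/eqP => /(congr1 (fun x => pval x 1%N)) /=; rewrite /mkp_fun expr1 modz_small // mod0z.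
Qed.

HB.instance Definition _ := GRing.Zmodule_isComNzRing.Build padic pmulA pmulC pmul1 pmulD pone_neq0.

End Padic.

(* Z_p for a prime p (for p prime, p.-2.+2 = p, so padic p is the ring of p-adic integers). *)

Record lieAlg (R : nzRingType) := LieAlg {
  lie_sort :> lmodType R;
  lie_br : lie_sort -> lie_sort -> lie_sort;
  lie_brDl : forall x y z, lie_br (x + y) z = lie_br x z + lie_br y z;
  lie_brDr : forall x y z, lie_br x (y + z) = lie_br x y + lie_br x z;
  lie_brZl : forall (a : R) x y, lie_br (a *: x) y = a *: lie_br x y;
  lie_brZr : forall (a : R) x y, lie_br x (a *: y) = a *: lie_br x y;
  lie_brxx : forall x, lie_br x x = 0;
  lie_jacobi : forall x y z,
    lie_br x (lie_br y z) + lie_br y (lie_br z x) + lie_br z (lie_br x y) = 0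
}.
Arguments lie_br {R l}.

Section LieDefs.
Variable R : nzRingType.

Definition lie_hom (L M : lieAlg R) (f : L -> M) : Prop :=
  (forall (a : R) (x y : L), f (a *: x + y) = a *: f x + f y) /\
  (forall x y : L, f (lie_br x y) = lie_br (f x) (f y)).

Definition span (V : lmodType R) (S : V -> Prop) : V -> Prop :=
  fun x => exists n (a : 'I_n -> R) (v : 'I_n -> V),
    (forall i, S (v i)) /\ x = \sum_(i < n) a i *: v i.

Definition lbr (L : lieAlg R) (A B : L -> Prop) : L -> Prop :=
  span (fun z => exists a b, [/\ A a, B b & z = lie_br a b]).

Definition comm_iter (L : lieAlg R) (I : L -> Prop) (i : nat) : L -> Prop :=
  iter i (fun S => lbr S (fun _ => True)) I.

(* lower central series: gamma L 1 = L, gamma L i.+1 = [gamma L i, L] *)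
Definition gamma (L : lieAlg R) (i : nat) : L -> Prop :=
  comm_iter (fun _ : L => True) i.-1.
Arguments gamma : clear implicits.

Definition nilpotent_class_le (L : lieAlg R) (c : nat) : Prop :=
  forall x, gamma L c.+1 x -> x = 0.

Definition is_free_nilpotent (c : nat) (X : Type) (L : lieAlg R) (iota : X -> L) : Prop :=
  nilpotent_class_le L c /\
  forall (M : lieAlg R), nilpotent_class_le M c -> forall f : X -> M,
    exists phi : L -> M, [/\ lie_hom phi, (forall x, phi (iota x) = f x) &
      forall psi : L -> M, lie_hom psi -> (forall x, psi (iota x) = f x) -> psi =1 phi].

Definition submodule (V : lmodType R) (S : V -> Prop) : Prop :=
  [/\ S 0, (forall x y, S x -> S y -> S (x + y)) & (forall (a : R) x, S x -> S (a *: x))].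

Definition is_ideal (L : lieAlg R) (I : L -> Prop) : Prop :=
  submodule I /\ forall x y, I x -> I (lie_br x y).

Definition is_ideal_in (L : lieAlg R) (H K : L -> Prop) : Prop :=
  [/\ forall x, K x -> H x, submodule K & forall x, lbr K H x -> K x].

Definition finite_index (L : lieAlg R) (I : L -> Prop) : Prop :=
  exists n (r : 'I_n -> L), forall x, exists i, I (x - r i).

(* j : L -> Lt exhibits Lt as L (x) R[1/p], i.e. (for R = Z_p) as L (x)_{Z_p} Q_p *)
Definition is_p_localization (L Lt : lieAlg R) (p : R) (j : L -> Lt) : Prop :=
  [/\ lie_hom j, injective j, bijective (fun y : Lt => p *: y) &
      forall y : Lt, exists k x, p ^+ k *: y = j x].

(* (1 / p^k) j(S) inside Lt *)
Definition pdiv_img (L Lt : lieAlg R) (j : L -> Lt) (p : R) (k : nat) (S : L -> Prop) : Lt -> Prop :=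
  fun y => exists2 x, S x & p ^+ k *: y = j x.

Definition sumsets (V : lmodType R) (n : nat) (S : 'I_n -> V -> Prop) : V -> Prop :=
  fun y => exists v : 'I_n -> V, (forall i, S i (v i)) /\ y = \sum_(i < n) v i.

End LieDefs.
Arguments gamma {R} L i.

(* Main.v *)
Require Import Defs.
From HB Require Import structures.
From mathcomp Require Import all_boot all_order all_algebra.
Import GRing.Theory.
Local Open Scope ring_scope.

Section Gen.
Variable R : comNzRingType.

Section Sp.
Variable V : lmodType R.
Lemma span_sub (T S : V -> Prop) : submodule S -> (forall v, T v -> S v) ->
  forall x, Defs.span T x -> S x.
Proof.
move=> [S0 SD SZ] TS x [n [a [v [Tv ->]]]].
by apply: (big_ind S) => // i _; apply: SZ; apply: TS.
Qed.
Lemma span_gen (T : V -> Prop) v : T v -> Defs.span T v.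
Proof. by move=> Tv; exists 1%N, (fun _ => 1), (fun _ => v); split=> //; rewrite big_ord1 scale1r. Qed.
Lemma span_submod (T : V -> Prop) : submodule (Defs.span T).
Proof.
split.
- by exists 0%N, (fun _ => 0), (fun _ => 0); split; [case| rewrite big_ord0].
- move=> x y [n [a [v [Tv ->]]]] [m [b [w [Tw ->]]]].
  exists (n + m)%N, (fun i => match split i with inl k => a k | inr k => b k end),
    (fun i => match split i with inl k => v k | inr k => w k end); split.
    by move=> i; case: (split i).
  rewrite big_split_ord /=; congr (_ + _); apply: eq_bigr => i _.
    by rewrite (unsplitK (inl _ i)).
  by rewrite (unsplitK (inr _ i)).
- move=> c x [n [a [v [Tv ->]]]].
  exists n, (fun i => c * a i), v; split => //.
  by rewrite scaler_sumr; apply: eq_bigr => i _; rewrite scalerA.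
Qed.
Lemma submod_sum (S : V -> Prop) n (F : 'I_n -> V) : submodule S ->
  (forall i, S (F i)) -> S (\sum_(i < n) F i).
Proof. by move=> [S0 SD SZ] H; apply: (big_ind S). Qed.
Lemma submod_sub (S : V -> Prop) x y : submodule S -> S x -> S y -> S (x - y).
Proof. by move=> [S0 SD SZ] Sx Sy; rewrite -scaleN1r; apply: SD => //; apply: SZ. Qed.
End Sp.

Variable L : lieAlg R.
Implicit Types x y z : L.
Local Notation br := (@lie_br R L).

Lemma br0l x : br 0 x = 0.
Proof. by have := lie_brZl 0 (0:L) x; rewrite !scale0r. Qed.
Lemma br0r x : br x 0 = 0.
Proof. by have := lie_brZr 0 x (0:L); rewrite !scale0r. Qed.
Lemma brNl x y : br (- x) y = - br x y.
Proof. by rewrite -scaleN1r lie_brZl scaleN1r. Qed.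
Lemma brN x y : br x y = - br y x.
Proof.
have := lie_brxx (x + y).
rewrite lie_brDl !lie_brDr !lie_brxx add0r addr0 => /eqP.
by rewrite addr_eq0 => /eqP.
Qed.
Lemma br_jac x g l : br x (br g l) = br (br x g) l - br (br x l) g.
Proof.
have := lie_jacobi x g l.
rewrite (brN g (br l x)) (brN l (br x g)) (brN l x) brNl opprK => /eqP.
rewrite -addrA addr_eq0 => /eqP ->.
by rewrite opprD opprK addrC.
Qed.

Lemma ci_submod (I : L -> Prop) k : submodule I -> submodule (comm_iter I k).
Proof. by case: k => [|k] // _; apply: span_submod. Qed.
Lemma ci_gen (I : L -> Prop) k a b : comm_iter I k a -> comm_iter I k.+1 (br a b).
Proof. by move=> H; apply: span_gen; exists a, b. Qed.
Lemma ci_mono (A B : L -> Prop) k : (forall x, A x -> B x) ->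
  forall x, comm_iter A k x -> comm_iter B k x.
Proof.
move=> AB; elim: k => [|k IH] //= x.
apply: span_sub; first exact: span_submod.
by move=> v [a [b [Aa _ ->]]]; apply: span_gen; exists a, b; split => //; apply: IH.
Qed.
Lemma ci_add (I : L -> Prop) m n : comm_iter I (m + n) = comm_iter (comm_iter I n) m.
Proof. by rewrite /comm_iter iterD. Qed.

Lemma submod_brr (S : L -> Prop) x : submodule S -> submodule (fun w => S (br x w)).
Proof.
move=> [S0 SD SZ]; split; first by rewrite br0r.
  by move=> a b Sa Sb; rewrite lie_brDr; apply: SD.
by move=> a b Sb; rewrite lie_brZr; apply: SZ.
Qed.

Lemma key (I : L -> Prop) : submodule I -> forall k i x w,
  comm_iter I i x -> comm_iter (fun _ => True) k w -> comm_iter I (i + k).+1 (br x w).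
Proof.
move=> sI; elim=> [|k IH] i x w Hx Hw.
  by rewrite addn0; apply: ci_gen.
move: w Hw; apply: span_sub; first by apply: submod_brr; apply: ci_submod.
move=> v [g [l [Hg _ ->]]].
rewrite br_jac; apply: submod_sub; first exact: ci_submod.
  by rewrite addnS; apply: ci_gen; apply: IH.
by rewrite -addSnnS; apply: IH => //; apply: ci_gen.
Qed.
Lemma br_suml n (F : 'I_n -> L) y : br (\sum_(i < n) F i) y = \sum_(i < n) br (F i) y.
Proof. exact: (big_morph (fun a => br a y) (fun a b => lie_brDl a b y) (br0l y)). Qed.
Lemma br_sumr n (F : 'I_n -> L) y : br y (\sum_(i < n) F i) = \sum_(i < n) br y (F i).
Proof. exact: (big_morph (fun a => br y a) (fun a b => lie_brDr y a b) (br0r y)). Qed.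
End Gen.

Lemma sumsets_submod (R : nzRingType) (V : lmodType R) n (S : 'I_n -> V -> Prop) :
  (forall i, submodule (S i)) -> submodule (sumsets S).
Proof.
move=> H; split.
- exists (fun _ => 0); split; last by rewrite big1.
  by move=> i; case: (H i).
- move=> x y [v [Sv ->]] [w [Sw ->]]; exists (fun i => v i + w i); split.
    by move=> i; case: (H i) => _ HD _; apply: HD.
  by rewrite big_split.
- move=> a x [v [Sv ->]]; exists (fun i => a *: v i); split.
    by move=> i; case: (H i) => _ _ HZ; apply: HZ.
  by rewrite scaler_sumr.
Qed.

Lemma sumsets_single (R : nzRingType) (V : lmodType R) n (S : 'I_n -> V -> Prop) i0 z :
  (forall i, S i 0) -> S i0 z -> sumsets S z.
Proof.
move=> H0 Hz; exists (fun i => if i == i0 then z else 0); split.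
  by move=> i; case: eqP => [->|].
rewrite (bigD1 i0) //= eqxx big1 ?addr0 // => i /negbTE ->. done.
Qed.


Theorem lemma3p3 (p c d : nat) (L Lt : lieAlg (padic p)) (iota : 'I_d -> L)
    (j : L -> Lt) (I : L -> Prop) :
  prime p -> (0 < c)%N -> (0 < d)%N ->
  is_free_nilpotent c iota ->
  is_p_localization p%:R j ->
  is_ideal I -> finite_index I ->
  let Lhat := sumsets (fun i : 'I_c => pdiv_img j p%:R i (gamma L i.+1)) in
  let Ihat := sumsets (fun i : 'I_c => pdiv_img j p%:R i (comm_iter I i)) in
  (forall y, lbr Ihat Lhat y -> exists2 z, Ihat z & y = p%:R *: z) /\
  is_ideal_in Lhat Ihat.
Proof.
move=> _ _ _ [nilL _] [jhom _ [g pK gK] _] [sI _] _ Lhat Ihat.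
set P : padic p := p%:R.
have jD : forall x y, j (x + y) = j x + j y.
  by move=> x y; rewrite -[x]scale1r jhom.1 !scale1r.
have j0 : j 0 = 0.
  by have := jD 0 0; rewrite addr0 -{1}(addr0 (j 0)) => /addrI <-.
have jZ : forall a x, j (a *: x) = a *: j x.
  by move=> a x; rewrite -[a *: x]addr0 jhom.1 j0 addr0.
have pdsub : forall k (S : L -> Prop), submodule S -> submodule (pdiv_img j P k S).
  move=> k S [S0 SD SZ]; split.
  - by exists 0 => //; rewrite scaler0 j0.
  - move=> y1 y2 [x1 H1 E1] [x2 H2 E2]; exists (x1 + x2); first exact: SD.
    by rewrite scalerDr E1 E2 jD.
  - move=> a y [x H E]; exists (a *: x); first exact: SZ.
    by rewrite scalerA mulrC -scalerA E jZ.
have Isub : submodule Ihat.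
  by apply: sumsets_submod => i; apply: pdsub; apply: ci_submod.
have Ihat0 : forall i : 'I_c, pdiv_img j P i (comm_iter I i) 0.
  by move=> i; case: (pdsub i _ (@ci_submod _ _ I i sI)).
have pinj : forall n (y : Lt), P ^+ n *: y = 0 -> y = 0.
  elim=> [|n IH] y; first by rewrite expr0 scale1r.
  rewrite exprSr. rewrite -scalerA. move=> /IH E.
  by rewrite -(pK y) E -[in RHS](pK 0) scaler0.
have H : forall n x y, comm_iter I n.+1 x -> P ^+ n *: y = j x ->
    exists2 z, Ihat z & y = P *: z.
  move=> n x y Hx Ey; case: (ltnP n.+1 c) => hn.
    exists (g y); last by rewrite gK.
    apply: (@sumsets_single _ _ _ _ (Ordinal hn)) => //.
    by exists x => //=; rewrite exprSr -scalerA gK.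
  have x0 : x = 0.
    apply: nilL; rewrite /gamma /=.
    move: Hx; rewrite -(subnKC hn) ci_add; exact: (@ci_mono _ _ _ (fun _ => True) c (fun _ _ => Logic.I) x).
  exists 0; first by case: Isub.
  by rewrite scaler0; apply: (pinj n); rewrite Ey x0 j0.
have part1 : forall y, lbr Ihat Lhat y -> exists2 z, Ihat z & y = P *: z.
  have Ssub : submodule (fun y => exists2 z, Ihat z & y = P *: z).
    case: Isub => I0 ID IZ; split.
    - by exists 0 => //; rewrite scaler0.
    - by move=> y1 y2 [z1 H1 ->] [z2 H2 ->]; exists (z1 + z2); [apply: ID|rewrite scalerDr].
    - by move=> a y1 [z1 H1 ->]; exists (a *: z1); [apply: IZ|rewrite scalerA mulrC -scalerA].
  move=> y Hy; apply: (@span_sub _ _ _ _ Ssub _ y Hy).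
  move=> v [u [w [[uu [Hu ->]] [ww [Hw ->]] ->]]].
  rewrite br_suml; apply: (@submod_sum _ _ _ _ _ Ssub) => i; rewrite br_sumr; apply: (@submod_sum _ _ _ _ _ Ssub) => k.
  case: (Hu i) => xi Hxi Exi; case: (Hw k) => wk Hwk Ewk.
  apply: (H (i + k)%N (lie_br xi wk)).
    by apply: key.
  by rewrite jhom.2 -Exi -Ewk lie_brZl lie_brZr scalerA exprD.
split; first exact: part1.
split => //.
- move=> z [v [Hv ->]]; exists v; split => // i.
  case: (Hv i) => x Hx Ex; exists x => //; rewrite /gamma /=.
  by move: Hx; apply: ci_mono.
- move=> x /part1 [z Hz ->]; by case: Isub => _ _ IZ; apply: IZ.
Qed.
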